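(* Let $H$ and $G$ be bipartite graphs with vertex classes $\tilde U\dot\cup\tilde V$ and $U\dot\cup V$ respectively, such that $\deg_H(\tilde v)\le\Delta$ for all $\tilde v\in\tilde V$, and let $f,f':\tilde V\to V$ be injective functions with switching distance $\mathrm{sw}(f,f')\le s$. Then the neighbourhood distance of the candidate graphs satisfies $\mathrm{nd}_{\tilde U}(B_f(H,G),B_{f'}(H,G))\le 2s\Delta$.
   Context: For an injective $f:\tilde V\to V$, a vertex $u\in U$ is an $f$-candidate for $\tilde u\in\tilde U$ if $f(N_H(\tilde u))\subseteq N_G(u)$; the candidate graph $B_f(H,G)$ is the bipartite graph on $\tilde U\dot\cup U$ whose edges are the pairs $\tilde uu$ with $u$ an $f$-candidate for $\tilde u$. An injective $f'$ is obtained from an injective $f$ by a switching if there are $a,b$ in the domain with $f'(a)=f(b)$, $f'(b)=f(a)$ and $f'(w)=f(w)$ for all $w\notin\{a,b\}$; $\mathrm{sw}(f,f')\le s$ means $f'$ is obtainable from $f$ by a sequence of at most $s$ switchings. For bipartite graphs $B,B'$ on the same vertex set $\tilde U\dot\cup U$, $\mathrm{nd}_{\tilde U}(B,B')$ is the number of $\tilde u\in\tilde U$ with $N_B(\tilde u)\ne N_{B'}(\tilde u)$. *)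

(* Defs.v *)
From mathcomp Require Import all_boot.
Set Implicit Arguments. Unset Strict Implicit. Unset Printing Implicit Defensive.

(* A bipartite graph with vertex classes A (dot-union) B is given by its
   edge relation e : A -> B -> bool (edges only go between the classes). *)

Section Defs.
Variables (Ut Vt U V : finType).

Definition nbhdL (A B : finType) (e : A -> B -> bool) (a : A) : {set B} :=
  [set b | e a b].
Definition nbhdR (A B : finType) (e : A -> B -> bool) (b : B) : {set A} :=
  [set a | e a b].

Definition switch (g : Vt -> V) (a b : Vt) : Vt -> V :=
  fun w => if w == a then g b else if w == b then g a else g w.

Definition sw_le (f f' : Vt -> V) (s : nat) : Prop :=
  exists ss : seq (Vt * Vt),
    size ss <= s /\ f' =1 foldl (fun g p => switch g p.1 p.2) f ss.

Definition candidate (eH : Ut -> Vt -> bool) (eG : U -> V -> bool)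
    (f : Vt -> V) : Ut -> U -> bool :=
  fun ut u => (f @: nbhdL eH ut) \subset nbhdL eG u.

Definition nd (B B' : Ut -> U -> bool) : nat :=
  #|[set ut | nbhdL B ut != nbhdL B' ut]|.
End Defs.

(* Main.v *)
Require Import Defs.
From mathcomp Require Import all_boot.

Lemma card_bigcup_le (I T : finType) (X : {set I}) (F : I -> {set T}) :
  #|\bigcup_(w in X) F w| <= \sum_(w in X) #|F w|.
Proof.
apply: (big_ind2 (fun (A : {set T}) n => #|A| <= n)).
- by rewrite cards0.
- move=> A a B b hA hB; apply: leq_trans (leq_card_setU A B) _.
  exact: leq_add.
- by [].
Qed.

Lemma sw_card (Vt V : finType) (f : Vt -> V) (ss : seq (Vt * Vt)) :
  #|[set w | f w != foldl (fun g p => switch g p.1 p.2) f ss w]| <= 2 * size ss.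
Proof.
elim/last_ind: ss => [|ss x IH].
  rewrite /=; apply/eq_leq; apply/eqP; rewrite cards_eq0; apply/eqP.
  by apply/setP => w; rewrite !inE eqxx.
rewrite foldl_rcons size_rcons.
set g := foldl _ f ss.
apply: leq_trans (_ : #|[set w | f w != g w] :|: [set x.1; x.2]| <= _).
  apply: subset_leq_card; apply/subsetP => w; rewrite !inE /switch.
  case: (w == x.1); first by rewrite orbT.
  case: (w == x.2); first by rewrite !orbT.
  by move=> ->.
apply: leq_trans (leq_card_setU _ _) _.
rewrite mulnS addnC; apply: leq_add => //.
apply: leq_trans (leq_card_setU _ _) _.
by rewrite !cards1.
Qed.

Theorem lemma11p4 (Ut Vt U V : finType)
    (eH : Ut -> Vt -> bool) (eG : U -> V -> bool) (Delta s : nat)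
    (hdeg : forall vt : Vt, #|nbhdR eH vt| <= Delta)
    (f f' : Vt -> V) (hf : injective f) (hf' : injective f')
    (hsw : sw_le f f' s) :
  nd (candidate eH eG f) (candidate eH eG f') <= 2 * s * Delta.
Proof.
case: hsw => ss [hs hf'e].
set X := [set w | f w != f' w].
have hX : #|X| <= 2 * s.
  have h2 : 2 * size ss <= 2 * s by rewrite leq_mul2l hs orbT.
  apply: leq_trans h2.
  have eqX : X = [set w | f w != foldl (fun g p => switch g p.1 p.2) f ss w].
    by apply/setP => w; rewrite !inE hf'e.
  rewrite eqX; exact: sw_card.
rewrite /nd.
apply: leq_trans (_ : #|\bigcup_(w in X) nbhdR eH w| <= _).
  apply: subset_leq_card; apply/subsetP => ut; rewrite inE => hne.
  apply/bigcupP.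
  case: (boolP [exists w, eH ut w && (f w != f' w)]).
    by case/existsP => w /andP [h1 h2]; exists w; rewrite !inE.
  move=> /existsPn hall.
  suff himg : f @: nbhdL eH ut = f' @: nbhdL eH ut.
    by move: hne; rewrite /nbhdL /candidate himg eqxx.
  apply: eq_in_imset => w; rewrite inE => hw.
  by move: (hall w); rewrite hw /= negbK => /eqP.
apply: leq_trans (@card_bigcup_le _ _ X (nbhdR eH)) _.
have hs2 : \sum_(w in X) #|nbhdR eH w| <= \sum_(w in X) Delta.
  by apply: leq_sum => w _.
apply: leq_trans hs2 _.
rewrite sum_nat_const mulnC [_ * Delta]mulnC leq_mul2l hX orbT.
by [].
Qed.
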